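(* Let $n\ge1$; for $i\in[n]$ let $d_i\ge1$, $p_{i0}<\cdots<p_{id_i}$ reals, $f_i:\{p_{i0},\dots,p_{id_i}\}\to[L_i,U_i]$, and let $\phi:\prod_i[L_i,U_i]\to\mathbb{R}$ be supermodular. Let $\sigma=(\sigma_1,\dots,\sigma_n)$, each $\sigma_i$ a permutation of $\{0,\dots,d_i\}$ with $f_i(p_{i,\sigma_i(0)})\le\cdots\le f_i(p_{i,\sigma_i(d_i)})$. Define $h:\operatorname{vert}(\Delta)\to\mathbb{R}$ by $h(\boldsymbol{v}_{1j_1},\dots,\boldsymbol{v}_{nj_n})=\phi(f_1(p_{1,\sigma_1(j_1)}),\dots,f_n(p_{n,\sigma_n(j_n)}))$. Then $h$ is supermodular on $\operatorname{vert}(\Delta)$ with respect to the componentwise order.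
   Context: $\Delta^d=\{\boldsymbol{z}\in\mathbb{R}^d:1\ge z_1\ge\cdots\ge z_d\ge0\}$, $\Delta=\Delta^{d_1}\times\cdots\times\Delta^{d_n}$; the vertices of $\Delta^{d_i}$ are $\boldsymbol{v}_{i0}=\boldsymbol{0}$ and $\boldsymbol{v}_{ij}=\boldsymbol{v}_{i,j-1}+\boldsymbol{e}_{ij}$ (first $j$ coordinates equal to $1$), and $\operatorname{vert}(\Delta)=\prod_i\{\boldsymbol{v}_{i0},\dots,\boldsymbol{v}_{id_i}\}$, which is closed under componentwise max and min. A function $g$ is supermodular if $g(\boldsymbol{u}\vee\boldsymbol{w})+g(\boldsymbol{u}\wedge\boldsymbol{w})\ge g(\boldsymbol{u})+g(\boldsymbol{w})$ for all $\boldsymbol{u},\boldsymbol{w}$ in its domain. *)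

(* Defs.v *)
From HB Require Import structures.
From mathcomp Require Import all_boot all_order all_algebra all_fingroup.
From mathcomp Require Import reals.
Set Implicit Arguments. Unset Strict Implicit. Unset Printing Implicit Defensive.
Import Order.TTheory GRing.Theory Num.Theory.
Local Open Scope ring_scope.

(* A point of Delta = Delta^{d_1} x ... x Delta^{d_n} lives in
   prod_i R^{d_i}, represented as a dependent function. *)
Definition pt (R : realType) (n : nat) (d : 'I_n -> nat) :=
  forall i : 'I_n, 'I_(d i) -> R.

(* vertex v_{ij} of Delta^{d_i}: first j coordinates equal to 1, rest 0 *)
Definition vtx (R : realType) (m : nat) (j : 'I_m.+1) : 'I_m -> R :=
  fun k => if (nat_of_ord k < nat_of_ord j)%N then 1 else 0.

Definition vtxP (R : realType) (n : nat) (d : 'I_n -> nat)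
  (j : forall i : 'I_n, 'I_(d i).+1) : pt R d :=
  fun i => vtx R (j i).

Definition in_vert (R : realType) (n : nat) (d : 'I_n -> nat) (z : pt R d) : Prop :=
  exists j : forall i : 'I_n, 'I_(d i).+1, z = vtxP R j.

Definition pjoin (R : realType) (n : nat) (d : 'I_n -> nat) (u w : pt R d) : pt R d :=
  fun i k => Num.max (u i k) (w i k).
Definition pmeet (R : realType) (n : nat) (d : 'I_n -> nat) (u w : pt R d) : pt R d :=
  fun i k => Num.min (u i k) (w i k).

Definition vmax (R : realType) (n : nat) (x y : 'I_n -> R) : 'I_n -> R :=
  fun i => Num.max (x i) (y i).
Definition vmin (R : realType) (n : nat) (x y : 'I_n -> R) : 'I_n -> R :=
  fun i => Num.min (x i) (y i).

Definition supermodular_on_box (R : realType) (n : nat) (L U : 'I_n -> R)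
  (phi : ('I_n -> R) -> R) : Prop :=
  forall x y : 'I_n -> R,
    (forall i, L i <= x i <= U i) -> (forall i, L i <= y i <= U i) ->
    phi (vmax x y) + phi (vmin x y) >= phi x + phi y.

Definition supermodular_on_vert (R : realType) (n : nat) (d : 'I_n -> nat)
  (h : pt R d -> R) : Prop :=
  forall u w : pt R d, in_vert u -> in_vert w ->
    h (pjoin u w) + h (pmeet u w) >= h u + h w.

(* Main.v *)
Require Import Defs.
From HB Require Import structures.
From mathcomp Require Import all_boot all_order all_algebra all_fingroup.
From mathcomp Require Import reals.
From Stdlib Require Import FunctionalExtensionality.
Import Order.TTheory GRing.Theory Num.Theory.
Local Open Scope ring_scope.

Lemma vtx_mono (R : realType) (m : nat) (a b : 'I_m.+1) (kk : 'I_m) :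
  (a <= b)%N -> vtx R a kk <= vtx R b kk.
Proof.
move=> ab; rewrite /vtx.
case: ifP => h1; case: ifP => h2 //.
- by rewrite (leq_trans h1 ab) in h2.
Qed.

Lemma vtx_ge0 (R : realType) (m : nat) (a : 'I_m.+1) (kk : 'I_m) : 0 <= vtx R a kk.
Proof. by rewrite /vtx; case: ifP. Qed.

Definition omax {m : nat} (a b : 'I_m) : 'I_m := if (a <= b)%N then b else a.
Definition omin {m : nat} (a b : 'I_m) : 'I_m := if (a <= b)%N then a else b.

Theorem mainTheorem11 (R : realType) (n : nat) (d : 'I_n -> nat)
  (p : forall i : 'I_n, 'I_(d i).+1 -> R)
  (L U : 'I_n -> R) (f : forall i : 'I_n, R -> R)
  (phi : ('I_n -> R) -> R)
  (sigma : forall i : 'I_n, {perm 'I_(d i).+1})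
  (h : pt R d -> R) :
  (0 < n)%N ->
  (forall i, (0 < d i)%N) ->
  (forall i (j k : 'I_(d i).+1), (j < k)%N -> p i j < p i k) ->
  (forall i (j : 'I_(d i).+1), L i <= f i (p i j) <= U i) ->
  supermodular_on_box L U phi ->
  (forall i (j k : 'I_(d i).+1), (j <= k)%N ->
     f i (p i (sigma i j)) <= f i (p i (sigma i k))) ->
  (forall j : forall i : 'I_n, 'I_(d i).+1,
     h (vtxP R j) = phi (fun i => f i (p i (sigma i (j i))))) ->
  supermodular_on_vert h.
Proof.
move=> _ _ _ hLU hsup hmono hh u w [j ->] [k ->].
pose jm := fun i => omax (j i) (k i).
pose jn := fun i => omin (j i) (k i).
have Ej : pjoin (vtxP R j) (vtxP R k) = vtxP R jm.
  apply: functional_extensionality_dep => i.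
  apply: functional_extensionality => kk.
  rewrite /pjoin /vtxP /jm /omax; case: ifP => jk.
    by rewrite max_r // vtx_mono.
  by rewrite max_l // vtx_mono // ltnW // ltnNge jk.
have En : pmeet (vtxP R j) (vtxP R k) = vtxP R jn.
  apply: functional_extensionality_dep => i.
  apply: functional_extensionality => kk.
  rewrite /pmeet /vtxP /jn /omin; case: ifP => jk.
    by rewrite min_l // vtx_mono.
  by rewrite min_r // vtx_mono // ltnW // ltnNge jk.
rewrite Ej En !hh.
set x := (fun i => f i (p i (sigma i (j i)))).
set y := (fun i => f i (p i (sigma i (k i)))).
have -> : (fun i => f i (p i (sigma i (jm i)))) = vmax x y.
  apply: functional_extensionality => i.
  rewrite /vmax /x /y /jm /omax; case: ifP => jk.
    by rewrite max_r // hmono.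
  by rewrite max_l // hmono // ltnW // ltnNge jk.
have -> : (fun i => f i (p i (sigma i (jn i)))) = vmin x y.
  apply: functional_extensionality => i.
  rewrite /vmin /x /y /jn /omin; case: ifP => jk.
    by rewrite min_l // hmono.
  by rewrite min_r // hmono // ltnW // ltnNge jk.
by apply: hsup => i; apply: hLU.
Qed.
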